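(* Let $\kappa<\lambda$ be regular uncountable cardinals and suppose there is a $\square(\lambda,<\kappa)$-sequence that is not full. Then $\mathrm{Refl}(2,\lambda)$ fails, i.e., there are two stationary subsets of $\lambda$ that do not reflect simultaneously.
   Context: For a set of ordinals $A$, $\mathrm{acc}(A)$ is the set of $\beta<\sup\{\alpha+1\mid\alpha\in A\}$ with $\beta=\sup(A\cap\beta)$. A coherent sequence of length $\lambda$ and width $<\eta$ is $\mathcal{C}=\langle\mathcal{C}_\alpha\mid\alpha<\lambda\rangle$ where each $\mathcal{C}_\alpha$ is a nonempty set of fewer than $\eta$ closed unbounded subsets of $\alpha$ (for successor $\alpha=\beta+1$, $\mathcal{C}_\alpha=\{\{\beta\}\}$), such that for all $\beta<\lambda$, $C\in\mathcal{C}_\beta$ and $\alpha\in\mathrm{acc}(C)$, $C\cap\alpha\in\mathcal{C}_\alpha$. A thread is a club $D\subseteq\lambda$ with $D\cap\alpha\in\mathcal{C}_\alpha$ for all $\alpha\in\mathrm{acc}(D)$. A $\square(\lambda,<\eta)$-sequence is a coherent sequence of length $\lambda$ and width $<\eta$ with no thread. For a coherent sequence $\mathcal{C}$, let $A_{\mathcal{C}}$ be the set of $\alpha<\lambda$ for which there is a club $D_\alpha\subseteq\lambda$ such that for every $\beta\in D_\alpha$, $\alpha\in\bigcup_{C\in\mathcal{C}_\beta}\mathrm{acc}(C)$; $\mathcal{C}$ is full if $A_{\mathcal{C}}$ is unbounded in $\lambda$. A stationary $S\subseteq\lambda$ reflects at $\alpha<\lambda$ if $\mathrm{cf}(\alpha)>\omega$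 and $S\cap\alpha$ is stationary in $\alpha$; two stationary sets reflect simultaneously if both reflect at a common $\alpha<\lambda$. *)

(* Defs.v *)
(* Ordinals below lambda are modelled as the elements of a
   type L carrying a strict well-order [lt]; lambda is the order type of L.
   Sets of ordinals are predicates [L -> Prop]. *)
From Stdlib Require Import Classical.
Set Implicit Arguments.

Section Ord.
Variable L : Type.
Variable lt : L -> L -> Prop.

Definition le (x y : L) : Prop := lt x y \/ x = y.

Definition strict_wellorder : Prop :=
  (forall x, ~ lt x x) /\
  (forall x y z, lt x y -> lt y z -> lt x z) /\
  (forall x y, lt x y \/ x = y \/ lt y x) /\
  well_founded lt.

(* beta = sup (A /\ beta)  (with sup of the empty set = 0) *)
Definition sup_below (A : L -> Prop) (b : L) : Prop :=
  forall g, lt g b -> exists d, A d /\ lt g d /\ lt d b.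

(* acc(A) as in the paper: beta < sup{alpha+1 | alpha in A} and beta = sup(A cap beta) *)
Definition acc (A : L -> Prop) (b : L) : Prop :=
  (exists a, A a /\ le b a) /\ sup_below A b.

Definition club_in (a : L) (C : L -> Prop) : Prop :=
  (forall x, C x -> lt x a) /\
  (forall b, lt b a -> exists g, C g /\ le b g) /\
  (forall g, lt g a -> (exists x, lt x g) -> sup_below C g -> C g).

Definition club (C : L -> Prop) : Prop :=
  (forall b, exists g, C g /\ le b g) /\
  (forall g, (exists x, lt x g) -> sup_below C g -> C g).

Definition is_succ (a b : L) : Prop := lt b a /\ forall x, lt b x -> le a x.

Definition card_lt (X : (L -> Prop) -> Prop) (k : L) : Prop :=
  exists g, lt g k /\ exists f : (L -> Prop) -> L,
    (forall E, X E -> lt (f E) g) /\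
    (forall E E', X E -> X E' -> f E = f E' -> forall x, E x <-> E' x).

(* "C cap a \in S" for a set S of sets (membership up to extensionality) *)
Definition restr_in (S : (L -> Prop) -> Prop) (C : L -> Prop) (a : L) : Prop :=
  exists E, S E /\ forall x, E x <-> (C x /\ lt x a).

Definition coherent_seq (k : L) (Cs : L -> (L -> Prop) -> Prop) : Prop :=
  (forall a, exists C, Cs a C) /\
  (forall a C, Cs a C -> club_in a C) /\
  (forall a, card_lt (Cs a) k) /\
  (forall a b, is_succ a b -> forall C, Cs a C <-> (forall x, C x <-> x = b)) /\
  (forall b C, Cs b C -> forall a, acc C a -> restr_in (Cs a) C a).

Definition thread (Cs : L -> (L -> Prop) -> Prop) (D : L -> Prop) : Prop :=
  club D /\ forall a, acc D a -> restr_in (Cs a) D a.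

Definition square_seq (k : L) (Cs : L -> (L -> Prop) -> Prop) : Prop :=
  coherent_seq k Cs /\ ~ exists D, thread Cs D.

Definition A_set (Cs : L -> (L -> Prop) -> Prop) (a : L) : Prop :=
  exists D, club D /\ forall b, D b -> exists C, Cs b C /\ acc C a.

Definition full (Cs : L -> (L -> Prop) -> Prop) : Prop :=
  forall b, exists a, A_set Cs a /\ le b a.

Definition stationary (S : L -> Prop) : Prop :=
  forall D, club D -> exists x, S x /\ D x.

Definition uncountable_cof (a : L) : Prop :=
  (exists x, lt x a) /\
  ~ exists g : nat -> L, (forall n, lt (g n) a) /\
                         (forall b, lt b a -> exists n, le b (g n)).

Definition stationary_in (a : L) (S : L -> Prop) : Prop :=
  forall C, club_in a C -> exists x, S x /\ C x.

Definition reflects_at (S : L -> Prop) (a : L) : Prop :=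
  uncountable_cof a /\ stationary_in a (fun x => S x /\ lt x a).

Definition regular_uncountable_top : Prop :=
  (forall a (f : L -> L), exists g, forall b, lt b a -> lt (f b) g) /\
  ~ exists f : L -> nat, forall x y, f x = f y -> x = y.

Definition regular_uncountable_below (k : L) : Prop :=
  (forall a, lt a k -> forall f : L -> L, (forall b, lt b a -> lt (f b) k) ->
     exists g, lt g k /\ forall b, lt b a -> lt (f b) g) /\
  ~ exists f : L -> nat, forall x y, lt x k -> lt y k -> f x = f y -> x = y.
End Ord.

(* Main.v *)
Require Import Defs.
From Stdlib Require Import Classical ClassicalEpsilon FunctionalExtensionality.

Section Main.
Variable L : Type.
Variable lt : L -> L -> Prop.
Variable Hwo : strict_wellorder lt.

Lemma irr x : ~ lt x x.
Proof. destruct Hwo as [H _]. apply H. Qed.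
Lemma trans x y z : lt x y -> lt y z -> lt x z.
Proof. destruct Hwo as [_ [H _]]. apply H. Qed.
Lemma tri x y : lt x y \/ x = y \/ lt y x.
Proof. destruct Hwo as [_ [_ [H _]]]. apply H. Qed.
Lemma wf : well_founded lt.
Proof. destruct Hwo as [_ [_ [_ H]]]. exact H. Qed.

Lemma le_lt x y z : le lt x y -> lt y z -> lt x z.
Proof. intros [H|H] H2; [eapply trans; eauto| subst; auto]. Qed.
Lemma lt_le x y z : lt x y -> le lt y z -> lt x z.
Proof. intros H [H2|H2]; [eapply trans; eauto| subst; auto]. Qed.
Lemma le_trans x y z : le lt x y -> le lt y z -> le lt x z.
Proof. intros [H|H] H2; [left; eapply lt_le; eauto| subst; auto]. Qed.
Lemma nlt_le x y : ~ lt x y -> le lt y x.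
Proof. intros H. destruct (tri x y) as [h|[h|h]]; [tauto|right; auto|left; auto]. Qed.
Lemma le_nlt x y : le lt x y -> ~ lt y x.
Proof. intros H H2. apply (irr x). eapply le_lt; eauto. Qed.
Lemma lt_le_w x y : lt x y -> le lt x y.
Proof. left; auto. Qed.
Lemma le_refl x : le lt x x.
Proof. right; auto. Qed.

Lemma wf_min (P : L -> Prop) : (exists x, P x) -> exists x, P x /\ forall y, lt y x -> ~ P y.
Proof.
  intros [x Hx]. revert Hx. induction x as [x IH] using (well_founded_ind wf).
  intros Hx. destruct (classic (exists y, lt y x /\ P y)) as [[y [h1 h2]]|H].
  - apply (IH y h1 h2).
  - exists x. split; auto. intros y h1 h2. apply H; eauto.
Qed.

Lemma lub (P : L -> Prop) : (exists u, forall x, P x -> lt x u) ->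
  exists s, (forall x, P x -> lt x s) /\ (forall y, lt y s -> exists x, P x /\ le lt y x)
   /\ (forall u, (forall x, P x -> lt x u) -> le lt s u).
Proof.
  intros Hb. destruct (wf_min (fun u => forall x, P x -> lt x u) Hb) as [s [Hs Hmin]].
  exists s. split; [auto|split].
  - intros y hy. specialize (Hmin y hy). apply not_all_ex_not in Hmin as [x Hx].
    exists x. apply imply_to_and in Hx as [h1 h2]. split; auto. apply nlt_le; auto.
  - intros u Hu. apply nlt_le. intros h. exact (Hmin u h Hu).
Qed.

Lemma max2 x y : exists z, le lt x z /\ le lt y z /\ (z = x \/ z = y).
Proof.
  destruct (tri x y) as [h|[h|h]].
  - exists y; split; [left; auto| split; [apply le_refl|auto]].
  - subst. exists y; split; [apply le_refl|split;[apply le_refl|auto]].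
  - exists x; split; [apply le_refl| split;[left;auto|auto]].
Qed.

Lemma seq_sup (v : nat -> L) : (forall n, lt (v n) (v (S n))) -> (exists u, forall n, lt (v n) u) ->
  exists s, (forall n, lt (v n) s) /\ (forall y, lt y s -> exists n, lt y (v n))
   /\ (forall u, (forall n, lt (v n) u) -> le lt s u).
Proof.
  intros Hinc [u Hu]. destruct (lub (fun x => exists n, x = v n)) as [s [h1 [h2 h3]]].
  { exists u. intros x [n ->]. auto. }
  exists s. split; [|split].
  - intros n. apply h1. eauto.
  - intros y hy. destruct (h2 y hy) as [x [[n ->] hle]]. exists (S n). eapply le_lt; eauto.
  - intros u' Hu'. apply h3. intros x [n ->]. auto.
Qed.

Variable Hlam : regular_uncountable_top lt.

Lemma two_elems : exists a b, lt b a.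
Proof.
  destruct Hlam as [_ H2]. apply NNPP. intros Hn. apply H2.
  exists (fun _ => 0). intros x y _.
  destruct (tri x y) as [h|[h|h]]; auto; exfalso; apply Hn; eauto.
Qed.

Lemma inhL : inhabited L.
Proof. destruct two_elems as [a _]. exact (inhabits a). Qed.

Lemma no_max x : exists y, lt x y.
Proof.
  destruct two_elems as [a [b hb]]. destruct Hlam as [H1 _].
  destruct (H1 a (fun _ => x)) as [g Hg]. exists g. apply (Hg b hb).
Qed.

Lemma above2 x y : exists z, lt x z /\ lt y z.
Proof.
  destruct (max2 x y) as [m [h1 [h2 _]]]. destruct (no_max m) as [z hz].
  exists z. split; eapply le_lt; eauto.
Qed.

Definition m0 : L := epsilon inhL (fun x => forall y, ~ lt y x).
Lemma m0_spec : forall y, ~ lt y m0.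
Proof.
  unfold m0. apply epsilon_spec.
  destruct inhL as [a]. destruct (wf_min (fun _ => True)) as [x [_ Hx]]; [exists a; auto|].
  exists x. intros y hy. exact (Hx y hy I).
Qed.

Definition sc (x : L) : L := epsilon inhL (fun y => lt x y /\ forall z, lt x z -> le lt y z).
Lemma sc_spec x : lt x (sc x) /\ forall z, lt x z -> le lt (sc x) z.
Proof.
  unfold sc. apply epsilon_spec.
  destruct (wf_min (fun y => lt x y) (no_max x)) as [y [h1 h2]].
  exists y. split; auto. intros z hz. apply nlt_le. intros h. exact (h2 z h hz).
Qed.

Fixpoint e (n : nat) : L := match n with 0 => m0 | S n => sc (e n) end.

Lemma e_succ n : lt (e n) (e (S n)).
Proof. simpl. apply sc_spec. Qed.

Lemma e_incr n m : (n < m)%nat -> lt (e n) (e m).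
Proof.
  induction 1.
  - apply e_succ.
  - eapply trans; eauto. apply e_succ.
Qed.

Lemma e_inj n m : e n = e m -> n = m.
Proof.
  intros H. destruct (PeanoNat.Nat.lt_total n m) as [h|[h|h]]; auto;
  apply e_incr in h; rewrite H in h; exfalso; eapply irr; eauto.
Qed.

Lemma e_down n x : lt x (e n) -> exists m, x = e m.
Proof.
  revert x; induction n; intros x hx.
  - exfalso. exact (m0_spec x hx).
  - simpl in hx. destruct (tri x (e n)) as [h|[h|h]].
    + auto.
    + eauto.
    + exfalso. destruct (sc_spec (e n)) as [_ h2]. apply (le_nlt _ _ (h2 x h) hx).
Qed.

Definition idx (x : L) : nat := epsilon (inhabits 0) (fun m => x = e m).
Lemma idx_e n : idx (e n) = n.
Proof.
  unfold idx. apply e_inj. symmetry. apply (epsilon_spec (inhabits 0) (fun m => e n = e m)). eauto.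
Qed.
Lemma idx_spec x : (exists m, x = e m) -> x = e (idx x).
Proof. intros H. unfold idx. apply (epsilon_spec (inhabits 0) (fun m => x = e m)). auto. Qed.

Lemma e_bounded : exists u, forall n, lt (e n) u.
Proof.
  apply NNPP. intros Hn. destruct Hlam as [_ H2]. apply H2.
  assert (Hall : forall x, exists m, x = e m).
  { intros x. apply NNPP. intros Hx. apply Hn. exists x. intros n. apply NNPP. intros h.
    apply nlt_le in h. apply Hx. apply (e_down (S n)). eapply le_lt; eauto. apply e_succ. }
  exists idx. intros x y h. rewrite (idx_spec x (Hall x)), (idx_spec y (Hall y)), h. auto.
Qed.

Definition w_prop (s : L) : Prop := (forall n, lt (e n) s) /\ (forall x, lt x s -> exists m, x = e m).
Lemma w_exists : exists s, w_prop s.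
Proof.
  destruct (seq_sup e e_succ e_bounded) as [s [h1 [h2 _]]].
  exists s. split; auto. intros x hx. destruct (h2 x hx) as [n hn]. eapply e_down; eauto.
Qed.
Definition w : L := epsilon inhL w_prop.
Lemma w_spec : w_prop w.
Proof. unfold w. apply epsilon_spec. apply w_exists. Qed.

Lemma omega_bound (g : nat -> L) : exists u, forall n, lt (g n) u.
Proof.
  destruct Hlam as [H1 _]. destruct (H1 w (fun x => g (idx x))) as [u Hu].
  exists u. intros n. rewrite <- (idx_e n). apply Hu. apply w_spec.
Qed.

Variable k : L.
Variable Hkap : regular_uncountable_below lt k.

Lemma w_lt_k : lt w k.
Proof.
  destruct (tri w k) as [h|h]; auto. exfalso. destruct Hkap as [_ H2]. apply H2.
  assert (Hall : forall x, lt x k -> exists m, x = e m).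
  { intros x hx. apply w_spec. destruct h as [h|h]; [subst; auto| eapply trans; eauto]. }
  exists idx. intros x y hx hy h'. rewrite (idx_spec x (Hall x hx)), (idx_spec y (Hall y hy)), h'. auto.
Qed.

Lemma omega_bound_k (g : nat -> L) : (forall n, lt (g n) k) -> exists u, lt u k /\ forall n, lt (g n) u.
Proof.
  intros Hg. destruct Hkap as [H1 _].
  destruct (H1 w w_lt_k (fun x => g (idx x))) as [u [hu Hu]]; [intros; auto|].
  exists u. split; auto. intros n. rewrite <- (idx_e n). apply Hu. apply w_spec.
Qed.

Lemma k_limit x : lt x k -> exists y, lt x y /\ lt y k.
Proof.
  intros hx. destruct Hkap as [H1 _].
  destruct (H1 w w_lt_k (fun _ => x)) as [u [hu Hu]]; [intros; auto|].
  exists u. split; auto. apply (Hu (e 0)). apply w_spec.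
Qed.

Lemma inter_clubs (E : L -> L -> Prop) : (forall a, club lt (E a)) ->
  forall u, exists x, lt u x /\ forall a, lt a u -> E a x.
Proof.
  intros HE u.
  assert (Hstep : forall v, exists v', lt v v' /\ forall a, lt a u -> exists y, E a y /\ lt v y /\ lt y v').
  { intros v.
    set (nx := fun a => epsilon inhL (fun y => E a y /\ lt v y)).
    assert (Hnx : forall a, E a (nx a) /\ lt v (nx a)).
    { intros a. unfold nx. apply epsilon_spec. destruct (no_max v) as [z hz].
      destruct (HE a) as [Hu _]. destruct (Hu z) as [y [h1 h2]]. exists y. split; auto. eapply lt_le; eauto. }
    destruct Hlam as [H1 _]. destruct (H1 u nx) as [g Hg].
    destruct (above2 g v) as [v' [h1 h2]]. exists v'. split; auto.
    intros a ha. exists (nx a). split; [apply Hnx|split; [apply Hnx|]]. eapply trans; eauto. }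
  set (stp := fun v => epsilon inhL (fun v' => lt v v' /\ forall a, lt a u -> exists y, E a y /\ lt v y /\ lt y v')).
  assert (Hstp : forall v, lt v (stp v) /\ forall a, lt a u -> exists y, E a y /\ lt v y /\ lt y (stp v)).
  { intros v. unfold stp. apply epsilon_spec. apply Hstep. }
  set (V := fun n => Nat.iter n stp u).
  assert (HV : forall n, lt (V n) (V (S n))). { intros n. apply Hstp. }
  destruct (seq_sup V HV (omega_bound V)) as [s [h1 [h2 _]]].
  exists s. split; [apply (h1 0)|]. intros a ha.
  destruct (HE a) as [_ Hc]. apply Hc. { exists (V 0). auto. }
  intros y hy. destruct (h2 y hy) as [n hn]. destruct (Hstp (V n)) as [_ Hs].
  destruct (Hs a ha) as [d [hd1 [hd2 hd3]]]. exists d. split; auto. split.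
  - eapply trans; eauto.
  - eapply trans; [exact hd3|]. apply (h1 (S n)).
Qed.

Definition good (b : L) : Prop :=
  (forall g : nat -> L, (forall n, lt (g n) b) -> exists v, lt v b /\ forall n, lt (g n) v) /\
  (forall a, lt a k -> forall f : L -> L, (forall x, lt x a -> lt (f x) b) ->
     exists v, lt v b /\ forall x, lt x a -> lt (f x) v).

Section Diag.
Variable E : L -> L -> Prop.
Variable HE : forall a, club lt (E a).
Variable b0 : L.

Definition Fq (u : L) : L := epsilon inhL (fun x => lt u x /\ forall a, lt a u -> E a x).
Lemma Fq_spec u : lt u (Fq u) /\ forall a, lt a u -> E a (Fq u).
Proof. unfold Fq. apply epsilon_spec. apply inter_clubs; auto. Qed.

Definition sprop (xi : L) (rec : forall y, lt y xi -> L) (s : L) : Prop :=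
  le lt b0 s /\ forall y (p : lt y xi), lt (rec y p) s.

Definition body (xi : L) (rec : forall y, lt y xi -> L) : L :=
  Fq (epsilon inhL (sprop xi rec)).

Definition h : L -> L := Fix wf (fun _ => L) body.

Lemma h_eq xi : h xi = body xi (fun y _ => h y).
Proof.
  unfold h. apply (Fix_eq wf (fun _ => L) body). intros x f g Hfg.
  assert (f = g). { apply functional_extensionality_dep. intros y.
    apply functional_extensionality_dep. intros p. apply Hfg. }
  subst. reflexivity.
Qed.

Lemma h_spec xi : exists s, le lt b0 s /\ (forall y, lt y xi -> lt (h y) s) /\ h xi = Fq s.
Proof.
  rewrite h_eq. unfold body. set (s := epsilon inhL _).
  assert (Hs : sprop xi (fun y _ => h y) s).
  { unfold s. apply epsilon_spec. destruct Hlam as [H1 _]. destruct (H1 xi h) as [g Hg].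
    destruct (max2 g b0) as [m [h1 [h2 _]]]. exists m. split; auto.
    intros y p. eapply lt_le; eauto. }
  exists s. destruct Hs as [Hs1 Hs2]. split; auto.
Qed.

Lemma h_incr y xi : lt y xi -> lt (h y) (h xi).
Proof.
  intros hy. destruct (h_spec xi) as [s [_ [h2 h3]]]. rewrite h3.
  eapply trans; [apply h2; auto|]. apply Fq_spec.
Qed.

Lemma h_b0 xi : lt b0 (h xi).
Proof.
  destruct (h_spec xi) as [s [h1 [_ h3]]]. rewrite h3. eapply le_lt; eauto. apply Fq_spec.
Qed.

Lemma h_E y xi a : lt y xi -> lt a (h y) -> E a (h xi).
Proof.
  intros hy ha. destruct (h_spec xi) as [s [_ [h2 h3]]]. rewrite h3.
  apply Fq_spec. eapply trans; eauto.
Qed.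

Lemma diag : exists b, lt b0 b /\ good b /\ forall a, lt a b -> E a b.
Proof.
  destruct (lub (fun x => exists xi, lt xi k /\ x = h xi)) as [b [hb1 [hb2 _]]].
  { destruct Hlam as [H1 _]. destruct (H1 k h) as [g Hg]. exists g. intros x [xi [h1 ->]]. auto. }
  assert (Hb : forall xi, lt xi k -> lt (h xi) b). { intros xi hxi. apply hb1. eauto. }
  assert (Happ : forall y, lt y b -> exists xi, lt xi k /\ lt y (h xi)).
  { intros y hy. destruct (hb2 y hy) as [x [[xi [hxi ->]] hle]].
    destruct (k_limit xi hxi) as [xi' [h1 h2]]. exists xi'. split; auto.
    eapply le_lt; eauto. apply h_incr; auto. }
  exists b. split; [|split].
  - eapply trans; [apply (h_b0 w)|]. apply Hb. apply w_lt_k.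
  - split.
    + intros g Hg.
      set (xf := fun n => epsilon inhL (fun xi => lt xi k /\ lt (g n) (h xi))).
      assert (Hxf : forall n, lt (xf n) k /\ lt (g n) (h (xf n))).
      { intros n. unfold xf. apply epsilon_spec. apply Happ. auto. }
      destruct (omega_bound_k xf (fun n => proj1 (Hxf n))) as [z [hz Hz]].
      exists (h z). split; [apply Hb; auto|]. intros n.
      eapply trans; [apply Hxf|]. apply h_incr. auto.
    + intros a ha f Hf.
      set (xf := fun x => epsilon inhL (fun xi => lt xi k /\ lt (f x) (h xi))).
      assert (Hxf : forall x, lt x a -> lt (xf x) k /\ lt (f x) (h (xf x))).
      { intros x hx. unfold xf. apply epsilon_spec. apply Happ. auto. }
      destruct Hkap as [H1 _].
      destruct (H1 a ha xf (fun x hx => proj1 (Hxf x hx))) as [z [hz Hz]].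
      exists (h z). split; [apply Hb; auto|]. intros x hx.
      eapply trans; [apply Hxf; auto|]. apply h_incr. auto.
  - intros a ha. destruct (Happ a ha) as [xi [hxi hax]].
    destruct (HE a) as [_ Hc]. apply Hc.
    { exists b0. eapply trans; [apply (h_b0 w)|]. apply Hb. apply w_lt_k. }
    intros y hy. destruct (Happ y hy) as [z [hz hyz]].
    destruct (max2 z xi) as [m [m1 [m2 m3]]].
    assert (hm : lt m k) by (destruct m3; subst; auto).
    destruct (k_limit m hm) as [z' [hz'1 hz'2]].
    exists (h z'). split; [|split].
    + apply (h_E xi); auto. eapply le_lt; eauto.
    + eapply trans; eauto. apply h_incr. eapply le_lt; eauto.
    + apply Hb; auto.
Qed.
End Diag.

Lemma good_meet (X : (L -> Prop) -> Prop) b0 b : good b -> lt b0 b ->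
  (forall C, X C -> club_in lt b C) -> card_lt lt X k -> (exists C, X C) ->
  exists s, lt b0 s /\ lt s b /\ forall C, X C -> acc lt C s.
Proof.
  intros [Gw Gk] hb0 Hcl [g [hg [f [Hf1 Hf2]]]] [C0 HC0].
  assert (Hlim : forall u, lt u b -> exists y, lt u y /\ lt y b).
  { intros u hu. destruct (Gw (fun _ => u)) as [v [h1 h2]]; auto. exists v; split; auto. apply (h2 0). }
  assert (Hstep : forall u, lt u b -> exists v, lt u v /\ lt v b /\
            forall C, X C -> exists y, C y /\ lt u y /\ lt y v).
  { intros u hu.
    set (phi := fun x => epsilon inhL (fun y => lt u y /\ lt y b /\ forall C, X C -> f C = x -> C y)).
    assert (Hphi : forall x, lt u (phi x) /\ lt (phi x) b /\ forall C, X C -> f C = x -> C (phi x)).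
    { intros x. unfold phi. apply epsilon_spec.
      destruct (classic (exists C, X C /\ f C = x)) as [[C1 [hC1 hfC1]]|Hno].
      - destruct (Hlim u hu) as [y0 [hy1 hy2]]. destruct (Hcl C1 hC1) as [Hs [Hu _]].
        destruct (Hu y0 hy2) as [y [hy hle]]. exists y. split; [eapply lt_le; eauto|split; auto].
        intros C hC hfC. subst x. apply (Hf2 C C1 hC hC1 hfC). auto.
      - destruct (Hlim u hu) as [y0 [hy1 hy2]]. exists y0. split; auto; split; auto.
        intros C hC hfC. exfalso; eauto. }
    destruct (Gk g hg phi (fun x _ => proj1 (proj2 (Hphi x)))) as [v [hv1 hv2]].
    exists v. split; [|split; [exact hv1|]].
    - eapply trans; [apply (Hphi (f C0))|]. apply hv2. apply Hf1; auto.
    - intros C hC. exists (phi (f C)). split; [apply (proj2 (proj2 (Hphi (f C)))); auto|split].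
      + apply (proj1 (Hphi (f C))).
      + apply hv2. apply Hf1; auto. }
  set (stp := fun u => epsilon inhL (fun v => lt u v /\ lt v b /\
            forall C, X C -> exists y, C y /\ lt u y /\ lt y v)).
  assert (Hstp : forall u, lt u b -> lt u (stp u) /\ lt (stp u) b /\
            forall C, X C -> exists y, C y /\ lt u y /\ lt y (stp u)).
  { intros u hu. unfold stp. apply (epsilon_spec inhL (fun v => lt u v /\ lt v b /\
            forall C, X C -> exists y, C y /\ lt u y /\ lt y v)). apply Hstep; auto. }
  set (V := fun n => Nat.iter n stp b0).
  assert (HVb : forall n, lt (V n) b).
  { induction n; [exact hb0|]. apply (Hstp (V n) IHn). }
  assert (HV : forall n, lt (V n) (V (S n))). { intros n. apply (Hstp (V n) (HVb n)). }
  destruct (Gw V HVb) as [ub [hub1 hub2]].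
  destruct (seq_sup V HV (ex_intro _ ub hub2)) as [s [h1 [h2 h3]]].
  exists s. split; [apply (h1 0)|split; [eapply le_lt; [apply h3; exact hub2|exact hub1]|]].
  intros C hC. assert (hsb : lt s b) by (eapply le_lt; [apply h3; exact hub2|exact hub1]).
  split.
  - destruct (Hcl C hC) as [_ [Hu _]]. apply Hu; auto.
  - intros y hy. destruct (h2 y hy) as [n hn]. destruct (Hstp (V n) (HVb n)) as [_ [_ Hs]].
    destruct (Hs C hC) as [d [hd1 [hd2 hd3]]]. exists d. split; auto. split.
    + eapply trans; eauto.
    + eapply trans; [exact hd3|]. apply (h1 (S n)).
Qed.

Lemma acc_transfer C E a b : lt a b -> sup_below lt C b -> (forall x, E x <-> C x /\ lt x b) ->
  (acc lt C a <-> acc lt E a).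
Proof.
  intros hab Hsb HE. split.
  - intros [_ Hs]. split.
    + destruct (Hsb a hab) as [d [hd1 [hd2 hd3]]]. exists d. split; [apply HE; auto|left; auto].
    + intros y hy. destruct (Hs y hy) as [d [hd1 [hd2 hd3]]]. exists d. split; auto.
      apply HE. split; auto. eapply trans; eauto.
  - intros [[x [hx1 hx2]] Hs]. split.
    + exists x. split; auto. apply HE; auto.
    + intros y hy. destruct (Hs y hy) as [d [hd1 [hd2 hd3]]]. exists d. split; auto. apply HE; auto.
Qed.

Lemma ucof_limit g x : uncountable_cof lt g -> lt x g -> exists y, lt x y /\ lt y g.
Proof.
  intros [_ Hn] hx. apply NNPP. intros H. apply Hn. exists (fun _ => x). split; auto.
  intros b hb. exists 0. apply nlt_le. intros h. apply H. eauto.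
Qed.

Lemma acc_club_in g C a : uncountable_cof lt g -> club_in lt g C -> lt a g ->
  club_in lt g (fun x => acc lt C x /\ lt a x).
Proof.
  intros Hg [Cs1 [Cu Cc]] hag. split; [|split].
  - intros x [[[c [hc1 hc2]] _] _]. eapply le_lt; eauto.
  - intros b hb. destruct (max2 b a) as [m [m1 [m2 m3]]].
    assert (hm : lt m g) by (destruct m3; subst; auto).
    set (nx := fun u => epsilon inhL (fun y => C y /\ lt u y)).
    assert (Hnx : forall u, lt u g -> C (nx u) /\ lt u (nx u)).
    { intros u hu. unfold nx. apply (epsilon_spec inhL (fun y => C y /\ lt u y)).
      destruct (ucof_limit g u Hg hu) as [y0 [h1 h2]]. destruct (Cu y0 h2) as [y [hy1 hy2]].
      exists y. split; auto. eapply lt_le; eauto. }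
    set (V := fun n => Nat.iter n nx m).
    assert (HVg : forall n, lt (V n) g).
    { induction n; [exact hm|]. apply Cs1. apply (Hnx (V n) IHn). }
    assert (HV : forall n, lt (V n) (V (S n))). { intros n. apply (Hnx (V n) (HVg n)). }
    assert (Hbd : exists x, lt x g /\ forall n, lt (V n) x).
    { destruct Hg as [_ Hn]. apply NNPP. intros Hc. apply Hn. exists V. split; auto.
      intros x hx. apply NNPP. intros Hx. apply Hc. exists x. split; auto.
      intros n. apply NNPP. intros h. apply Hx. exists n. apply nlt_le; auto. }
    destruct Hbd as [ub [hub1 hub2]].
    destruct (seq_sup V HV (ex_intro _ ub hub2)) as [s [h1 [h2 h3]]].
    assert (hsg : lt s g) by (eapply le_lt; [apply h3; exact hub2|exact hub1]).
    exists s. split; [split; [split|]|].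
    + apply Cu; auto.
    + intros y hy. destruct (h2 y hy) as [n hn]. exists (V (S n)). split; [apply (Hnx (V n) (HVg n))|].
      split; [eapply trans; [exact hn| apply HV]|apply h1].
    + eapply le_lt; [exact m2|]. apply (h1 0).
    + left. eapply le_lt; [exact m1|]. apply (h1 0).
  - intros x hx [z hz] Hs. split; [split|].
    + apply Cu; auto.
    + intros y hy. destruct (Hs y hy) as [d [[[_ hd] _] [hd2 hd3]]].
      destruct (hd y hd2) as [c [hc1 [hc2 hc3]]]. exists c. split; auto. split; auto. eapply trans; eauto.
    + destruct (Hs z hz) as [d [[_ hd] [_ hd3]]]. eapply trans; eauto.
Qed.

End Main.

Theorem theorem2p12 (L : Type) (lt : L -> L -> Prop) (k : L)
  (Hwo : strict_wellorder lt)
  (Hlam : regular_uncountable_top lt)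
  (Hkap : regular_uncountable_below lt k)
  (Cs : L -> (L -> Prop) -> Prop)
  (Hsq : square_seq lt k Cs)
  (Hnf : ~ full lt Cs) :
  exists S T : L -> Prop, stationary lt S /\ stationary lt T /\
    ~ exists a, reflects_at lt S a /\ reflects_at lt T a.
Proof.
  destruct Hsq as [[Hne [Hcl [Hcard [_ Hcoh]]]] _].
  assert (Hb : exists b, forall a, A_set lt Cs a -> ~ le lt b a).
  { apply NNPP; intro H; apply Hnf; intro b; apply NNPP; intro H2; apply H; exists b.
    intros a Ha Hle; apply H2; eauto. }
  destruct Hb as [b Hb].
  set (T := fun a x => lt a x /\ forall C, Cs x C -> acc lt C a).
  set (S := fun a x => lt a x /\ forall C, Cs x C -> ~ acc lt C a).
  assert (HS : forall a, le lt b a -> stationary lt (S a)).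
  { intros a hba D HD. apply NNPP; intro Hn. apply (Hb a); auto.
    exists (fun x => D x /\ lt a x). split.
    - destruct HD as [Du Dc]. split.
      + intros y. destruct (above2 L lt Hwo Hlam y a) as [z [h1 h2]].
        destruct (Du z) as [g [hg1 hg2]]. exists g. split; [split; auto; eapply lt_le; eauto|].
        left; eapply lt_le; eauto.
      + intros g [x hx] Hs. split.
        * apply Dc; [eauto|]. intros y hy; destruct (Hs y hy) as [d [[hd _] hd']]; eauto.
        * destruct (Hs x hx) as [d [[_ hd] [_ hd3]]]. eapply trans; eauto.
    - intros x [hx1 hx2]. apply NNPP; intro Hx. apply Hn. exists x. split; auto.
      split; auto. intros C hC hacc; apply Hx; eauto. }
  assert (HR : forall a, ~ exists g, reflects_at lt (S a) g /\ reflects_at lt (T a) g).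
  { intros a [g [[Hg1 Hg2] [_ Hg3]]]. destruct (Hne g) as [C0 HC0]. pose proof (Hcl g C0 HC0) as Hc0.
    assert (hag : lt a g).
    { destruct (Hg2 (fun x => lt x g)) as [x [[[hx _] hxg] _]].
      - split; [auto|split; [intros b0 hb0; exists b0; split; auto; right; auto| intros; auto]].
      - eapply trans; eauto. }
    pose proof (acc_club_in L lt Hwo Hlam g C0 a Hg1 Hc0 hag) as HK.
    destruct (Hg2 _ HK) as [x1 [[[hx1a Hx1] hx1g] [hacc1 _]]].
    destruct (Hg3 _ HK) as [x2 [[[hx2a Hx2] hx2g] [hacc2 _]]].
    destruct (Hcoh g C0 HC0 x1 hacc1) as [E1 [HE1 HE1e]].
    destruct (Hcoh g C0 HC0 x2 hacc2) as [E2 [HE2 HE2e]].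
    apply (Hx1 E1 HE1). apply (acc_transfer L lt Hwo C0 E1 a x1 hx1a (proj2 hacc1) HE1e).
    apply (acc_transfer L lt Hwo C0 E2 a x2 hx2a (proj2 hacc2) HE2e). apply Hx2; auto. }
  destruct (classic (exists a, le lt b a /\ stationary lt (T a))) as [[a [hba HTa]]|Hno].
  - exists (S a), (T a). split; [apply HS; auto|split; [auto|apply HR]].
  - exfalso.
    set (E := fun a => epsilon (inhabits (fun _ : L => True))
               (fun D => club lt D /\ (le lt b a -> forall x, T a x -> ~ D x))).
    assert (HE : forall a, club lt (E a) /\ (le lt b a -> forall x, T a x -> ~ E a x)).
    { intros a. unfold E. apply (epsilon_spec (inhabits (fun _ : L => True))
               (fun D => club lt D /\ (le lt b a -> forall x, T a x -> ~ D x))).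
      destruct (classic (le lt b a)) as [hle|hnle].
      - assert (H : ~ stationary lt (T a)) by eauto. unfold stationary in H.
        apply not_all_ex_not in H as [D HD]. apply imply_to_and in HD as [HD1 HD2].
        exists D. split; auto. intros _ x hx hDx. apply HD2. eauto.
      - exists (fun _ => True). split; [|tauto]. split; [intros y; exists y; split; auto; right; auto|auto]. }
    destruct (diag L lt Hwo Hlam k Hkap E (fun a => proj1 (HE a)) b) as [be [hbe [Hgood HEb]]].
    destruct (good_meet L lt Hwo Hlam k (Cs be) b be Hgood hbe (Hcl be) (Hcard be) (Hne be))
      as [s [hs1 [hs2 hs3]]].
    apply (proj2 (HE s) (lt_le_w L lt b s hs1) be); [split; auto|]. apply HEb; auto.
Qed.
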